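(* If $\omega\le\alpha<\vartheta(\varepsilon_{\Omega+1})$ and $m<\omega$ are such that $1<\alpha[m]_\vartheta<\omega$, then $\alpha=\omega$.
   Context: $\Omega$ is the first uncountable ordinal; $\varepsilon_{\Omega+1}$ the least $\varepsilon>\Omega$ with $\omega^\varepsilon=\varepsilon$. Every $0<\xi<\varepsilon_{\Omega+1}$ has a unique $\Omega$-normal form $\xi=\Omega^{\alpha}\beta+\gamma$ with $0<\beta<\Omega$, $\gamma<\Omega^{\alpha}$. $C(0)=\{0\}$, $C(\Omega^\alpha\beta+\gamma)=C(\alpha)\cup C(\gamma)\cup\{\beta\}$; $\xi^*=\max C(\xi)$. For $\theta<\Omega$: $0[\theta]=1[\theta]=0$; $(\Omega^\alpha\beta+\gamma)[\theta]=\Omega^\alpha\beta+\gamma[\theta]$ if $\gamma>0$; $(\Omega^\alpha\beta)[\theta]=\Omega^\alpha\theta$ if $\beta$ is a limit; $\Omega^{\alpha+1}[\theta]=\Omega^\alpha\theta$; $(\Omega^\alpha(\beta+1))[\theta]=\Omega^\alpha\beta+(\Omega^\alpha)[\theta]$ if $\beta>0$; $\Omega^\alpha[\theta]=\Omega^{\alpha[\theta]}$ if $\alpha$ is a limit. $\tau(0)=0$, $\tau(\zeta+1)=1$, $\tau(\Omega^\alpha\beta+\gamma)=\tau(\gamma)$ if $\gamma>0$, $\tau(\Omega^\alpha\beta)=\beta$ if $\beta$ limit, $\tau(\Omega^\alpha(\beta+1))=\tau(\alpha)$ if $\alpha$ limit, $\tau(\Omega^{\alpha+1}(\beta+1))=\Omega$.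 $P$ is the set of countable ordinals of the form $\omega^\xi$; $\vartheta(\xi)$ ($\xi<\varepsilon_{\Omega+1}$) is the least $\theta\in P$ with $\theta>\xi^*$ such that all $\zeta<\xi$ with $\zeta^*<\theta$ have $\vartheta(\zeta)<\theta$. $\Omega_0=1$, $\Omega_{n+1}=\Omega^{\Omega_n}$, $\vartheta(\varepsilon_{\Omega+1})=\sup_n\vartheta(\Omega_n)$, $\hat\varepsilon_{\Omega+1}=\{\xi:\xi^*<\vartheta(\varepsilon_{\Omega+1})\}$; $P'$ = limit points of $P$. $\mathrm{FIX}$ = set of $\xi$ with $(\xi[1])^*<\xi^*=\tau(\xi)=\vartheta(\gamma)$ for some $\gamma>\xi$; $\mathrm{JUMP}=\{0\}\cup\{\text{successors}\}\cup\mathrm{FIX}$; $\vartheta^*(\xi)=\vartheta(\zeta)$ if $\xi=\zeta+1$, $\tau(\xi)$ if $\xi\in\mathrm{FIX}$, $0$ otherwise. Write $\xi=\alpha+\beta$ with $\alpha$ a multiple of $\Omega$, $\beta<\Omega$; $\check\xi=\alpha$ if $\vartheta^*(\xi)>0$, else $\xi$; $\vartheta^{(0)}(\xi)=\vartheta^*(\xi)$, $\vartheta^{(i+1)}(\xi)=\vartheta(\check\xi[\vartheta^{(i)}(\xi)])$. Define $\xi[n]_\vartheta$ recursively: $0[n]=0$; for $\Omega\le\xi\in\hat\varepsilon_{\Omega+1}$ with $\tau(\xi)<\Omega$, $\xi[n]=\xi[\tau(\xi)[n]]$; if $\xi=\vartheta(\zeta)\in P'$ ($\zeta\in\hat\varepsilon_{\Omega+1}$):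 $\xi[n]=\vartheta(\check\zeta[n]+\vartheta^*(\zeta))$ when $\tau(\check\zeta)<\Omega$, $\xi[n]=\vartheta^{(n)}(\zeta)$ when $\tau(\check\zeta)=\Omega$; $(\omega^{\alpha_1}+\dots+\omega^{\alpha_k})[n]=\omega^{\alpha_1}+\dots+\omega^{\alpha_{k-1}}+(\omega^{\alpha_k})[n]$ for $k\ge2$, $\alpha_1\ge\dots\ge\alpha_k$; $\vartheta(\beta)[n]=\vartheta^*(\beta)\cdot n$ for $\beta<\Omega$, $\beta\in\mathrm{JUMP}$. *)

(* Defs.v *)
(* Ordinals below omega_2 are modelled by Brouwer trees with
   countable (nat-indexed) and Omega-indexed (indexed by countable trees)
   suprema, compared by the standard inductive order (sound and complete for
   the ordinal values, classically). *)
From Stdlib Require Import List ClassicalEpsilon.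
Import ListNotations.

Inductive B : Type :=
| BZ : B
| BS : B -> B
| BL : (nat -> B) -> B.

Inductive O : Type :=
| OZ : O
| OS : O -> O
| OL : (nat -> O) -> O
| OW : (B -> O) -> O.

Fixpoint emb (b : B) : O :=
  match b with
  | BZ => OZ
  | BS b' => OS (emb b')
  | BL f => OL (fun k => emb (f k))
  end.

Inductive Ole : O -> O -> Prop :=
| Ole_Z x : Ole OZ x
| Ole_S x y : Ole x y -> Ole (OS x) (OS y)
| Ole_Lr x f k : Ole x (f k) -> Ole x (OL f)
| Ole_Ll f x : (forall k, Ole (f k) x) -> Ole (OL f) x
| Ole_Wr x f b : Ole x (f b) -> Ole x (OW f)
| Ole_Wl f x : (forall b, Ole (f b) x) -> Ole (OW f) x.

Definition Olt (x y : O) : Prop := Ole (OS x) y.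
Definition Oeq (x y : O) : Prop := Ole x y /\ Ole y x.

Definition the (P : O -> Prop) : O := epsilon (inhabits OZ) P.

Fixpoint add (x y : O) : O :=
  match y with
  | OZ => x
  | OS y' => OS (add x y')
  | OL f => OL (fun k => add x (f k))
  | OW f => OW (fun b => add x (f b))
  end.

Fixpoint mul (x y : O) : O :=
  match y with
  | OZ => OZ
  | OS y' => add (mul x y') x
  | OL f => OL (fun k => mul x (f k))
  | OW f => OW (fun b => mul x (f b))
  end.

Fixpoint exp (x y : O) : O :=
  match y with
  | OZ => OS OZ
  | OS y' => mul (exp x y') x
  | OL f => OL (fun k => exp x (f k))
  | OW f => OW (fun b => exp x (f b))
  end.

Definition natO (n : nat) : O := Nat.iter n OS OZ.
Definition omega : O := OL natO.
Definition Omega : O := OW emb.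

Fixpoint OmegaN (n : nat) : O :=
  match n with 0 => OS OZ | S k => exp Omega (OmegaN k) end.
Definition eps : O := OL OmegaN.         (* epsilon_{Omega+1} *)

Definition succO (x : O) : Prop := exists y, Oeq x (OS y).
Definition limO (x : O) : Prop := Olt OZ x /\ ~ succO x.

Definition NF (xi a b g : O) : Prop :=
  Oeq xi (add (mul (exp Omega a) b) g) /\ Olt OZ b /\ Olt b Omega /\
  Olt g (exp Omega a).

Inductive InC : O -> O -> Prop :=
| InC_zero xi x : Ole xi OZ -> Ole x OZ -> InC xi x
| InC_a xi a b g x : NF xi a b g -> InC a x -> InC xi x
| InC_g xi a b g x : NF xi a b g -> InC g x -> InC xi x
| InC_b xi a b g x : NF xi a b g -> Oeq x b -> InC xi x.

Definition star (xi : O) : O :=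
  the (fun s => InC xi s /\ forall y, InC xi y -> Ole y s).

(* FSO xi th r  :  xi[th] = r  (fundamental sequences at level Omega) *)
Inductive FSO : O -> O -> O -> Prop :=
| FSO_0 xi th : Ole xi OZ -> FSO xi th OZ
| FSO_1 xi th : Oeq xi (natO 1) -> FSO xi th OZ
| FSO_g xi th a b g g' : NF xi a b g -> Olt OZ g -> FSO g th g' ->
    FSO xi th (add (mul (exp Omega a) b) g')
| FSO_lim xi th a b g : NF xi a b g -> Ole g OZ -> limO b ->
    FSO xi th (mul (exp Omega a) th)
| FSO_succ xi th a b b' g r : NF xi a b g -> Ole g OZ -> Oeq b (OS b') ->
    Olt OZ b' -> FSO (exp Omega a) th r ->
    FSO xi th (add (mul (exp Omega a) b') r)
| FSO_expS xi th a : Oeq xi (exp Omega (OS a)) -> FSO xi th (mul (exp Omega a) th)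
| FSO_explim xi th a a' : Oeq xi (exp Omega a) -> limO a -> FSO a th a' ->
    FSO xi th (exp Omega a').

Definition fso (xi th : O) : O := the (FSO xi th).

Inductive Tau : O -> O -> Prop :=
| Tau_0 xi t : Ole xi OZ -> Oeq t OZ -> Tau xi t
| Tau_S xi z t : Oeq xi (OS z) -> Oeq t (natO 1) -> Tau xi t
| Tau_g xi a b g t : NF xi a b g -> Olt OZ g -> Tau g t -> Tau xi t
| Tau_lim xi a b g t : NF xi a b g -> Ole g OZ -> limO b -> Oeq t b -> Tau xi t
| Tau_alim xi a b b' g t : NF xi a b g -> Ole g OZ -> Oeq b (OS b') -> limO a ->
    Tau a t -> Tau xi t
| Tau_aS xi a a' b b' g t : NF xi a b g -> Ole g OZ -> Oeq b (OS b') ->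
    Oeq a (OS a') -> Oeq t Omega -> Tau xi t.

Definition tau (xi : O) : O := the (Tau xi).

Definition InP (t : O) : Prop := Olt t Omega /\ exists x, Oeq t (exp omega x).
Definition InP' (t : O) : Prop :=
  Olt OZ t /\ Olt t Omega /\
  forall x, Olt x t -> exists p, InP p /\ Olt x p /\ Olt p t.

Definition theta_cond (th : O -> O) (xi t : O) : Prop :=
  InP t /\ Olt (star xi) t /\
  forall z, Olt z xi -> Olt (star z) t -> Olt (th z) t.

Definition is_theta (th : O -> O) : Prop :=
  forall xi, Olt xi eps ->
    theta_cond th xi (th xi) /\ forall t, theta_cond th xi t -> Ole (th xi) t.

(* theta(eps_{Omega+1}) = sup_n theta(Omega_n) *)
Definition BH (th : O -> O) : O := OL (fun n => th (OmegaN n)).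

Definition InEpsHat (th : O -> O) (xi : O) : Prop :=
  Olt xi eps /\ Olt (star xi) (BH th).

Definition FIX (th : O -> O) (xi : O) : Prop :=
  Olt (star (fso xi (natO 1))) (star xi) /\ Oeq (star xi) (tau xi) /\
  exists g, Olt xi g /\ Olt g eps /\ Oeq (tau xi) (th g).

Definition JUMP (th : O -> O) (xi : O) : Prop :=
  Ole xi OZ \/ succO xi \/ FIX th xi.

Definition thstar (th : O -> O) (xi : O) : O :=
  the (fun v =>
    (exists z, Oeq xi (OS z) /\ Oeq v (th z)) \/
    (~ succO xi /\ FIX th xi /\ Oeq v (tau xi)) \/
    (~ succO xi /\ ~ FIX th xi /\ Oeq v OZ)).

Definition check (th : O -> O) (xi : O) : O :=
  the (fun c =>
    (Olt OZ (thstar th xi) /\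
       exists d r, Oeq c (mul Omega d) /\ Olt r Omega /\ Oeq xi (add c r)) \/
    (Ole (thstar th xi) OZ /\ Oeq c xi)).

Fixpoint thit (th : O -> O) (xi : O) (i : nat) : O :=
  match i with
  | 0 => thstar th xi
  | S i' => th (fso (check th xi) (thit th xi i'))
  end.

Fixpoint cnf_sum (l : list O) : O :=
  match l with [] => OZ | a :: l' => add (exp omega a) (cnf_sum l') end.

Fixpoint decr (l : list O) : Prop :=
  match l with
  | a :: ((b :: _) as l') => Ole b a /\ decr l'
  | _ => True
  end.

(* FSn th xi n r :  xi[n]_theta = r *)
Inductive FSn (th : O -> O) : O -> nat -> O -> Prop :=
| FSn_zero xi n : Ole xi OZ -> FSn th xi n OZ
| FSn_big xi n t : Ole Omega xi -> InEpsHat th xi -> Olt (tau xi) Omega ->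
    FSn th (tau xi) n t -> FSn th xi n (fso xi t)
| FSn_P1 xi z n t : Olt xi Omega -> Oeq xi (th z) -> InEpsHat th z -> InP' xi ->
    Olt (tau (check th z)) Omega -> FSn th (check th z) n t ->
    FSn th xi n (th (add t (thstar th z)))
| FSn_P2 xi z n : Olt xi Omega -> Oeq xi (th z) -> InEpsHat th z -> InP' xi ->
    Oeq (tau (check th z)) Omega -> FSn th xi n (thit th z n)
| FSn_cnf xi l a n t : Olt xi Omega -> l <> [] -> decr (l ++ [a]) ->
    Oeq xi (cnf_sum (l ++ [a])) -> FSn th (exp omega a) n t ->
    FSn th xi n (add (cnf_sum l) t)
| FSn_jump xi b n : Olt xi Omega -> Oeq xi (th b) -> Olt b Omega -> JUMP th b ->
    FSn th xi n (mul (thstar th b) (natO n)).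

(* Main.v *)
Require Import Defs.
From Stdlib Require Import List Classical ClassicalEpsilon FunctionalExtensionality Lia.
Import ListNotations.

Lemma Ole_refl x : Ole x x.
Proof.
  induction x.
  - constructor.
  - constructor; auto.
  - apply Ole_Ll; intro k; eapply Ole_Lr; eauto.
  - apply Ole_Wl; intro k; eapply Ole_Wr; eauto.
Qed.

Lemma Ole_OZ_any x : Ole x OZ -> forall y, Ole x y.
Proof.
  intros H. remember OZ as z. induction H; subst; try discriminate; intros.
  - constructor.
  - apply Ole_Ll; intro k; apply H0; auto.
  - apply Ole_Wl; intro k; apply H0; auto.
Qed.

Lemma Ole_trans x y z : Ole x y -> Ole y z -> Ole x z.
Proof.
  intros H1 H2. revert x H1. induction H2; intros x0 H1.
  - eapply Ole_OZ_any; eauto.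
  - remember (OS x) as w. induction H1; subst; try discriminate.
    + constructor.
    + injection Heqw; intros; subst. constructor; auto.
    + apply Ole_Ll; intro k; auto.
    + apply Ole_Wl; intro k; auto.
  - eapply Ole_Lr; eauto.
  - remember (OL f) as w. induction H1; subst; try discriminate.
    + constructor.
    + injection Heqw; intros; subst. eapply H0; eauto.
    + apply Ole_Ll; intro k; auto.
    + apply Ole_Wl; intro k; auto.
  - eapply Ole_Wr; eauto.
  - remember (OW f) as w. induction H1; subst; try discriminate.
    + constructor.
    + apply Ole_Ll; intro k; auto.
    + injection Heqw; intros; subst. eapply H0; eauto.
    + apply Ole_Wl; intro k; auto.
Qed.

Lemma Ole_S_inv a b : Ole (OS a) (OS b) -> Ole a b.
Proof. intro H; inversion H; subst; auto. Qed.

Lemma OS_not_le_OZ a : ~ Ole (OS a) OZ.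
Proof. intro H; inversion H. Qed.

Lemma Olt_L_inv x f : Ole (OS x) (OL f) -> exists k, Ole (OS x) (f k).
Proof. intro H; inversion H; subst; eauto. Qed.

Lemma Olt_W_inv x f : Ole (OS x) (OW f) -> exists b, Ole (OS x) (f b).
Proof. intro H; inversion H; subst; eauto. Qed.

Lemma Ole_OS_r x y : Ole x y -> Ole x (OS y).
Proof.
  intro H; induction H.
  - constructor.
  - constructor; auto.
  - eapply Ole_trans; [exact IHOle|]. constructor. eapply Ole_Lr; apply Ole_refl.
  - apply Ole_Ll; auto.
  - eapply Ole_trans; [exact IHOle|]. constructor. eapply Ole_Wr; apply Ole_refl.
  - apply Ole_Wl; auto.
Qed.

Lemma le_succ x : Ole x (OS x).
Proof. apply Ole_OS_r, Ole_refl. Qed.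

Lemma Olt_le x y : Olt x y -> Ole x y.
Proof. unfold Olt; intro; eapply Ole_trans; [apply le_succ|eauto]. Qed.

Lemma lt_irrefl x : ~ Olt x x.
Proof.
  unfold Olt. induction x as [|x IHx|f IH|f IH]; intro H.
  - inversion H.
  - apply IHx, Ole_S_inv, H.
  - destruct (Olt_L_inv _ _ H) as [k Hk]. apply (IH k).
    eapply Ole_trans; [|exact Hk]. constructor. eapply Ole_Lr; apply Ole_refl.
  - destruct (Olt_W_inv _ _ H) as [k Hk]. apply (IH k).
    eapply Ole_trans; [|exact Hk]. constructor. eapply Ole_Wr; apply Ole_refl.
Qed.

Lemma lt_le_trans x y z : Olt x y -> Ole y z -> Olt x z.
Proof. unfold Olt; apply Ole_trans. Qed.
Lemma le_lt_trans x y z : Ole x y -> Olt y z -> Olt x z.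
Proof. unfold Olt; intros; eapply Ole_trans; [constructor; eauto|eauto]. Qed.
Lemma lt_trans x y z : Olt x y -> Olt y z -> Olt x z.
Proof. intros; eapply lt_le_trans; eauto; apply Olt_le; auto. Qed.

Lemma le_lt_false x y : Ole x y -> Olt y x -> False.
Proof. intros; eapply lt_irrefl; eapply lt_le_trans; eauto. Qed.

Lemma total x y : Ole x y \/ Olt y x.
Proof.
  revert y. induction x; intro y.
  - left; constructor.
  - induction y.
    + right. unfold Olt. constructor. constructor.
    + destruct (IHx y) as [H|H].
      * left; constructor; auto.
      * right. unfold Olt. constructor. exact H.
    + destruct (classic (exists k, Ole (OS x) (o k))) as [[k Hk]|Hn].
      * left; eapply Ole_Lr; eauto.
      * right. unfold Olt. constructor. apply Ole_Ll. intro k.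
        destruct (H k) as [H1|H1]. { exfalso; eauto. }
        apply Ole_S_inv; exact H1.
    + destruct (classic (exists k, Ole (OS x) (o k))) as [[k Hk]|Hn].
      * left; eapply Ole_Wr; eauto.
      * right. unfold Olt. constructor. apply Ole_Wl. intro k.
        destruct (H k) as [H1|H1]. { exfalso; eauto. }
        apply Ole_S_inv; exact H1.
  - destruct (classic (exists k, Olt y (o k))) as [[k Hk]|Hn].
    + right. eapply lt_le_trans; eauto. eapply Ole_Lr; apply Ole_refl.
    + left. apply Ole_Ll. intro k. destruct (H k y); auto. exfalso; eauto.
  - destruct (classic (exists k, Olt y (o k))) as [[k Hk]|Hn].
    + right. eapply lt_le_trans; eauto. eapply Ole_Wr; apply Ole_refl.
    + left. apply Ole_Wl. intro k. destruct (H k y); auto. exfalso; eauto.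
Qed.

Lemma wf_Olt : well_founded Olt.
Proof.
  assert (forall x y, Ole y x -> Acc Olt y).
  { induction x; intros y Hy; constructor; intros z Hz; unfold Olt in Hz.
    - exfalso. apply (OS_not_le_OZ z). eapply Ole_trans; eauto.
    - apply IHx. apply Ole_S_inv. eapply Ole_trans; eauto.
    - destruct (Olt_L_inv z o) as [k Hk]. eapply Ole_trans; eauto.
      apply (H k). apply Olt_le; exact Hk.
    - destruct (Olt_W_inv z o) as [k Hk]. eapply Ole_trans; eauto.
      apply (H k). apply Olt_le; exact Hk. }
  intro x; apply (H x), Ole_refl.
Qed.

Lemma the_spec (P : O -> Prop) : (exists x, P x) -> P (the P).
Proof. intro H; unfold the; apply epsilon_spec; exact H. Qed.

Lemma add_ge_l x y : Ole x (add x y).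
Proof.
  induction y; simpl.
  - apply Ole_refl.
  - apply Ole_OS_r; auto.
  - eapply Ole_Lr with (k:=0); auto.
  - eapply Ole_Wr with (b:=BZ); auto.
Qed.

Lemma add_ge_r x y : Ole y (add x y).
Proof.
  induction y; simpl.
  - constructor.
  - constructor; auto.
  - apply Ole_Ll; intro k; eapply Ole_Lr; eauto.
  - apply Ole_Wl; intro k; eapply Ole_Wr; eauto.
Qed.

Lemma add_mono_r x y y' : Ole y y' -> Ole (add x y) (add x y').
Proof.
  intro H; induction H; simpl.
  - apply add_ge_l.
  - constructor; auto.
  - eapply Ole_Lr; eauto.
  - apply Ole_Ll; auto.
  - eapply Ole_Wr; eauto.
  - apply Ole_Wl; auto.
Qed.

Lemma add_mono_l x x' y : Ole x x' -> Ole (add x y) (add x' y).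
Proof.
  intro H; induction y; simpl; auto.
  - constructor; auto.
  - apply Ole_Ll; intro k; eapply Ole_Lr; eauto.
  - apply Ole_Wl; intro k; eapply Ole_Wr; eauto.
Qed.

Lemma add_0_l_le x : Ole (add OZ x) x.
Proof.
  induction x; simpl.
  - constructor.
  - constructor; auto.
  - apply Ole_Ll; intro k; eapply Ole_Lr; eauto.
  - apply Ole_Wl; intro k; eapply Ole_Wr; eauto.
Qed.

Lemma mul_mono_r x y y' : Ole y y' -> Ole (mul x y) (mul x y').
Proof.
  intro H; induction H; simpl.
  - constructor.
  - apply add_mono_l; auto.
  - eapply Ole_Lr; eauto.
  - apply Ole_Ll; auto.
  - eapply Ole_Wr; eauto.
  - apply Ole_Wl; auto.
Qed.

Lemma mul_mono_l x x' y : Ole x x' -> Ole (mul x y) (mul x' y).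
Proof.
  intro H; induction y; simpl.
  - constructor.
  - eapply Ole_trans; [apply add_mono_l; eauto|]. apply add_mono_r; auto.
  - apply Ole_Ll; intro k; eapply Ole_Lr; eauto.
  - apply Ole_Wl; intro k; eapply Ole_Wr; eauto.
Qed.

Definition one := OS OZ.

Lemma mul_1_l_ge x : Ole x (mul one x).
Proof.
  induction x; simpl.
  - constructor.
  - constructor; auto.
  - apply Ole_Ll; intro k; eapply Ole_Lr; eauto.
  - apply Ole_Wl; intro k; eapply Ole_Wr; eauto.
Qed.

Lemma mul_1_l_le x : Ole (mul one x) x.
Proof.
  induction x; simpl.
  - constructor.
  - constructor; auto.
  - apply Ole_Ll; intro k; eapply Ole_Lr; eauto.
  - apply Ole_Wl; intro k; eapply Ole_Wr; eauto.
Qed.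

Lemma mul_0_l_le y : Ole (mul OZ y) OZ.
Proof.
  induction y; simpl; auto.
  - constructor.
  - apply Ole_Ll; auto.
  - apply Ole_Wl; auto.
Qed.

Lemma mul_ge x y : Ole one y -> Ole x (mul y x).
Proof. intro H. eapply Ole_trans; [apply mul_1_l_ge|]. apply mul_mono_l; auto. Qed.

Lemma mul_1_r_le e : Ole (mul e one) e.
Proof. simpl. apply add_0_l_le. Qed.
Lemma mul_1_r_ge e : Ole e (mul e one).
Proof. simpl. apply add_ge_r. Qed.

Lemma exp_ge1 x y : Ole one x -> Ole one (exp x y).
Proof.
  intro H; induction y; simpl.
  - apply Ole_refl.
  - eapply Ole_trans; [exact H|]. apply mul_ge; auto.
  - eapply Ole_Lr with (k:=0); auto.
  - eapply Ole_Wr with (b:=BZ); auto.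
Qed.

Lemma exp_mono_r x y y' : Ole one x -> Ole y y' -> Ole (exp x y) (exp x y').
Proof.
  intros Hx H; induction H; simpl.
  - apply exp_ge1; auto.
  - apply mul_mono_l; auto.
  - eapply Ole_Lr; eauto.
  - apply Ole_Ll; auto.
  - eapply Ole_Wr; eauto.
  - apply Ole_Wl; auto.
Qed.

Definition two := OS (OS OZ).

Lemma lt_mul_2 e : Ole one e -> Olt e (mul e two).
Proof.
  intro H. unfold Olt. simpl.
  eapply Ole_trans; [|apply add_mono_r; exact H]. simpl.
  constructor. apply add_ge_r.
Qed.

Lemma two_le_Omega : Ole two Omega.
Proof. unfold Omega. apply Ole_Wr with (b := BS (BS BZ)). simpl. apply Ole_refl. Qed.

Lemma one_le_Omega : Ole one Omega.
Proof. eapply Ole_trans; [apply le_succ|apply two_le_Omega]. Qed.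

Lemma lt_mul_Omega e : Ole one e -> Olt e (mul e Omega).
Proof. intro H. eapply lt_le_trans; [apply lt_mul_2; auto|]. apply mul_mono_r, two_le_Omega. Qed.

Lemma expO_ge1 y : Ole one (exp Omega y).
Proof. apply exp_ge1, one_le_Omega. Qed.

Lemma expO_mono y y' : Ole y y' -> Ole (exp Omega y) (exp Omega y').
Proof. apply exp_mono_r, one_le_Omega. Qed.

Lemma expO_lt_S a : Olt (exp Omega a) (exp Omega (OS a)).
Proof. simpl. apply lt_mul_Omega, expO_ge1. Qed.

Lemma expO_strict a b : Olt a b -> Olt (exp Omega a) (exp Omega b).
Proof. intro H. eapply lt_le_trans; [apply expO_lt_S|]. apply expO_mono; auto. Qed.

Lemma le_expO x : Ole x (exp Omega x).
Proof.
  induction x.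
  - constructor.
  - eapply Ole_trans; [constructor; exact IHx|]. apply expO_lt_S.
  - apply Ole_Ll; intro k; simpl; eapply Ole_Lr; eauto.
  - apply Ole_Wl; intro k; simpl; eapply Ole_Wr; eauto.
Qed.

Lemma add_assoc x y z : add x (add y z) = add (add x y) z.
Proof.
  induction z; simpl; f_equal; auto; apply functional_extensionality; auto.
Qed.

Lemma mul_distr x y z : mul x (add y z) = add (mul x y) (mul x z).
Proof.
  induction z; simpl; auto.
  - rewrite IHz. symmetry; apply add_assoc.
  - f_equal; apply functional_extensionality; auto.
  - f_equal; apply functional_extensionality; auto.
Qed.

Lemma mul_assoc x y z : mul x (mul y z) = mul (mul x y) z.
Proof.
  induction z; simpl; auto.
  - rewrite mul_distr, IHz. reflexivity.
  - f_equal; apply functional_extensionality; auto.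
  - f_equal; apply functional_extensionality; auto.
Qed.


Lemma exp_add_le x a b : Ole (mul (exp x a) (exp x b)) (exp x (add a b)).
Proof.
  induction b; simpl.
  - apply add_0_l_le.
  - rewrite mul_assoc. apply mul_mono_l; auto.
  - apply Ole_Ll; intro k; eapply Ole_Lr; eauto.
  - apply Ole_Wl; intro k; eapply Ole_Wr; eauto.
Qed.

Definition Fk k := match k with 0 => OZ | S k' => OmegaN k' end.
Lemma OmegaN_exp k : OmegaN k = exp Omega (Fk k).
Proof. destruct k; reflexivity. Qed.

Lemma Fk_strict k : Olt (Fk k) (Fk (S k)).
Proof.
  induction k.
  - simpl. unfold Olt. apply Ole_refl.
  - change (Olt (OmegaN k) (OmegaN (S k))). rewrite !OmegaN_exp. apply expO_strict; auto.
Qed.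

Lemma OmegaN_strict k : Olt (OmegaN k) (OmegaN (S k)).
Proof. exact (Fk_strict (S k)). Qed.

Lemma OmegaN_mono k k' : (k <= k')%nat -> Ole (OmegaN k) (OmegaN k').
Proof.
  induction 1. apply Ole_refl. eapply Ole_trans; eauto. apply Olt_le, OmegaN_strict.
Qed.

Lemma Fk_le k : Ole (Fk k) (OmegaN k).
Proof. destruct k; simpl. constructor. apply Olt_le, OmegaN_strict. Qed.

Lemma lt_eps_iff x : Olt x eps <-> exists k, Olt x (OmegaN k).
Proof.
  split.
  - intro H; apply Olt_L_inv in H; exact H.
  - intros [k Hk]. unfold Olt, eps. eapply Ole_Lr; eauto.
Qed.

Lemma EE k : Ole (add (OmegaN k) (OmegaN k)) (OmegaN (S k)).
Proof.
  set (e := OmegaN k).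
  apply Ole_trans with (mul e two).
  { simpl. apply add_mono_l. apply add_ge_r. }
  apply Ole_trans with (mul e Omega).
  { apply mul_mono_r, two_le_Omega. }
  unfold e. rewrite OmegaN_exp. rewrite (OmegaN_exp (S k)).
  change (mul (exp Omega (Fk k)) Omega) with (exp Omega (OS (Fk k))).
  apply expO_mono. apply Fk_strict.
Qed.

Lemma lt_eps_k2 x y : Olt x eps -> Olt y eps -> exists k, Olt x (OmegaN k) /\ Olt y (OmegaN k).
Proof.
  intros Hx Hy. apply lt_eps_iff in Hx as [k1 H1]. apply lt_eps_iff in Hy as [k2 H2].
  exists (Nat.max k1 k2). split; eapply lt_le_trans; eauto; apply OmegaN_mono; lia.
Qed.

Lemma eps_add x y : Olt x eps -> Olt y eps -> Olt (add x y) eps.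
Proof.
  intros Hx Hy. destruct (lt_eps_k2 x y Hx Hy) as [k [H1 H2]].
  apply lt_eps_iff. exists (S k). unfold Olt. change (OS (add x y)) with (add x (OS y)).
  eapply Ole_trans; [|apply EE].
  eapply Ole_trans; [apply add_mono_l, Olt_le, H1|]. apply add_mono_r, H2.
Qed.

Lemma eps_mul x y : Olt x eps -> Olt y eps -> Olt (mul x y) eps.
Proof.
  intros Hx Hy. destruct (lt_eps_k2 x y Hx Hy) as [k [H1 H2]].
  apply lt_eps_iff. exists (S (S (S k))).
  eapply le_lt_trans; [|apply OmegaN_strict].
  apply Ole_trans with (mul (OmegaN k) (OmegaN k)).
  { eapply Ole_trans; [apply mul_mono_l, Olt_le, H1|]. apply mul_mono_r, Olt_le, H2. }
  rewrite OmegaN_exp. eapply Ole_trans; [apply exp_add_le|].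
  rewrite (OmegaN_exp (S (S k))). simpl Fk. apply expO_mono.
  eapply Ole_trans; [|apply EE].
  eapply Ole_trans; [apply add_mono_l, Fk_le|]. apply add_mono_r, Fk_le.
Qed.

Lemma eps_expO a : Olt a eps -> Olt (exp Omega a) eps.
Proof.
  intros Ha. apply lt_eps_iff in Ha as [k Hk]. apply lt_eps_iff. exists (S k).
  eapply lt_le_trans; [apply expO_lt_S|]. simpl OmegaN. apply expO_mono; auto.
Qed.

Lemma Omega_le_E1 : Ole Omega (OmegaN 1).
Proof. simpl. apply mul_1_l_ge. Qed.

Lemma cnt_eps x : Olt x Omega -> Olt x eps.
Proof. intro H. apply lt_eps_iff. exists 1. eapply lt_le_trans; eauto. apply Omega_le_E1. Qed.

Lemma le_eps x y : Ole x y -> Olt y eps -> Olt x eps.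
Proof. intros; eapply le_lt_trans; eauto. Qed.

Fixpoint natB (n : nat) : B := match n with 0 => BZ | S k => BS (natB k) end.
Lemma emb_natB n : emb (natB n) = natO n.
Proof. induction n; simpl; auto. rewrite IHn; reflexivity. Qed.

Lemma omega_le_emb : Ole omega (emb (BL natB)).
Proof.
  unfold omega; simpl. apply Ole_Ll; intro k; eapply Ole_Lr with (k:=k).
  rewrite emb_natB. apply Ole_refl.
Qed.

Lemma omega_lt_Omega : Olt omega Omega.
Proof. unfold Olt, Omega. apply Ole_Wr with (b := BS (BL natB)). simpl. constructor. apply omega_le_emb. Qed.

Lemma natO_lt_omega n : Olt (natO n) omega.
Proof. unfold Olt, omega. apply Ole_Lr with (k := S n). apply Ole_refl. Qed.

Lemma natO_lt_eps n : Olt (natO n) eps.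
Proof. apply cnt_eps. eapply lt_trans; [apply natO_lt_omega|apply omega_lt_Omega]. Qed.

Lemma Omega_lt_eps : Olt Omega eps.
Proof. apply lt_eps_iff. exists 2. eapply le_lt_trans; [apply Omega_le_E1|apply OmegaN_strict]. Qed.

Lemma interval (F : O -> O)
  (HL : forall f, F (OL f) = OL (fun k => F (f k)))
  (HW : forall f, F (OW f) = OW (fun b => F (f b))) x :
  Ole (F OZ) x -> forall q, Olt x (F q) -> exists q0, Ole (F q0) x /\ Olt x (F (OS q0)).
Proof.
  intros H0 q. induction q; intro Hq.
  - exfalso; exact (le_lt_false _ _ H0 Hq).
  - destruct (total (F q) x) as [H|H]. { exists q; auto. } apply IHq; exact H.
  - rewrite HL in Hq. apply Olt_L_inv in Hq as [k Hk]. eauto.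
  - rewrite HW in Hq. apply Olt_W_inv in Hq as [k Hk]. eauto.
Qed.

Lemma subtr u x : Ole u x -> exists r, Oeq x (add u r).
Proof.
  intro H.
  destruct (interval (add u) (fun f => eq_refl) (fun f => eq_refl) x H (OS x)) as [r [H1 H2]].
  { unfold Olt; simpl. constructor. apply add_ge_r. }
  exists r. split; auto. apply Ole_S_inv. exact H2.
Qed.

Lemma division y x : Ole one y -> exists q r, Oeq x (add (mul y q) r) /\ Olt r y.
Proof.
  intro Hy.
  destruct (interval (mul y) (fun f => eq_refl) (fun f => eq_refl) x (Ole_Z _) (OS x)) as [q [H1 H2]].
  { unfold Olt; simpl. eapply Ole_trans; [|apply add_mono_r; exact Hy]. simpl.
    constructor. apply mul_ge; auto. }
  destruct (subtr _ _ H1) as [r Hr]. exists q, r. split; auto.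
  destruct (total y r) as [H|H]; auto. exfalso.
  simpl in H2. eapply le_lt_false; [|exact H2].
  eapply Ole_trans; [apply add_mono_r; exact H|]. apply Hr.
Qed.

Lemma NF_exists xi : Ole one xi -> Olt xi eps -> exists a b g, NF xi a b g.
Proof.
  intros H1 He. apply lt_eps_iff in He as [k Hk].
  destruct k as [|k]. { exfalso. exact (le_lt_false _ _ H1 Hk). }
  destruct (interval (exp Omega) (fun f => eq_refl) (fun f => eq_refl) xi H1 (OmegaN k) Hk)
    as [a [Ha1 Ha2]].
  destruct (division (exp Omega a) xi (expO_ge1 a)) as [q [r [Hq Hr]]].
  exists a, q, r. unfold NF. split; [exact Hq|]. split; [|split; auto].
  - destruct (total q OZ) as [H|H]; auto. exfalso.
    assert (Ole xi r).
    { eapply Ole_trans; [apply Hq|]. eapply Ole_trans; [apply add_mono_l|apply add_0_l_le].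
      eapply Ole_trans; [apply mul_mono_r; exact H|]. constructor. }
    eapply le_lt_false; [|exact (lt_le_trans _ _ _ Hr Ha1)]. auto.
  - destruct (total Omega q) as [H|H]; auto. exfalso.
    change (exp Omega (OS a)) with (mul (exp Omega a) Omega) in Ha2. eapply le_lt_false; [|exact Ha2].
    eapply Ole_trans; [apply mul_mono_r; exact H|].
    eapply Ole_trans; [apply add_ge_l|apply Hq].
Qed.

Lemma NF_m_le xi a b g : NF xi a b g -> Ole (mul (exp Omega a) b) xi.
Proof. intros (H & _). eapply Ole_trans; [apply add_ge_l|apply H]. Qed.

Lemma NF_e_le_m xi a b g : NF xi a b g -> Ole (exp Omega a) (mul (exp Omega a) b).
Proof. intros (_ & Hb & _). eapply Ole_trans; [apply mul_1_r_ge|]. apply mul_mono_r; exact Hb. Qed.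

Lemma NF_e_le xi a b g : NF xi a b g -> Ole (exp Omega a) xi.
Proof. intro H. eapply Ole_trans; [eapply NF_e_le_m; eauto|eapply NF_m_le; eauto]. Qed.

Lemma NF_g_lt xi a b g : NF xi a b g -> Olt g xi.
Proof. intro H. eapply lt_le_trans; [apply H|eapply NF_e_le; eauto]. Qed.

Lemma NF_b_le xi a b g : NF xi a b g -> Ole b xi.
Proof. intro H. eapply Ole_trans; [|eapply NF_m_le; eauto]. apply mul_ge, expO_ge1. Qed.

Lemma FSO_step k (IHk : forall xi, Olt xi (Fk k) -> forall th, exists r, FSO xi th r) :
  forall xi, Olt xi (OmegaN k) -> forall th, exists r, FSO xi th r.
Proof.
  intro xi. induction xi as [xi IHxi] using (well_founded_induction wf_Olt).
  intros Hxi th.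
  destruct (total xi OZ) as [H0|H0]. { exists OZ; apply FSO_0; auto. }
  assert (Hxe : Olt xi eps) by (apply lt_eps_iff; eauto).
  destruct (NF_exists xi H0 Hxe) as [a [b [g HNF]]].
  pose proof HNF as (Heq & Hb0 & HbO & Hg).
  set (e := exp Omega a) in *.
  destruct (total g OZ) as [Hg0|Hg0].
  2:{ assert (Hgx : Olt g xi) by (eapply NF_g_lt; eauto).
      destruct (IHxi g Hgx (lt_trans _ _ _ Hgx Hxi) th) as [r Hr].
      exists (add (mul e b) r). eapply FSO_g; eauto. }
  destruct (classic (succO b)) as [[b' Hb']|Hns].
  2:{ exists (mul e th). eapply FSO_lim; eauto. split; auto. }
  destruct (total b' OZ) as [Hb'0|Hb'0].
  2:{ assert (Hex : Olt e xi).
      { eapply lt_le_trans; [apply lt_mul_2, expO_ge1|].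
        eapply Ole_trans; [|eapply NF_m_le; eauto]. apply mul_mono_r.
        eapply Ole_trans; [|apply Hb']. constructor. exact Hb'0. }
      destruct (IHxi e Hex (lt_trans _ _ _ Hex Hxi) th) as [r Hr].
      exists (add (mul e b') r). eapply FSO_succ; eauto. }
  assert (Hxie : Oeq xi e).
  { split; [|eapply NF_e_le; eauto].
    eapply Ole_trans; [apply Heq|].
    eapply Ole_trans; [apply add_mono_r; exact Hg0|]. simpl.
    eapply Ole_trans; [|apply mul_1_r_le]. apply mul_mono_r.
    eapply Ole_trans; [apply Hb'|]. constructor; exact Hb'0. }
  destruct (total a OZ) as [Ha0|Ha0].
  { exists OZ. apply FSO_1. split; auto.
    eapply Ole_trans; [apply Hxie|]. apply (expO_mono _ _ Ha0). }
  destruct (classic (succO a)) as [[a' Ha']|Hna].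
  { exists (mul (exp Omega a') th). apply FSO_expS. split.
    - eapply Ole_trans; [apply Hxie|]. apply expO_mono, Ha'.
    - eapply Ole_trans; [|apply Hxie]. apply expO_mono, Ha'. }
  assert (Hak : Olt a (Fk k)).
  { destruct (total (Fk k) a) as [H|H]; auto. exfalso.
    eapply le_lt_false; [|exact Hxi]. rewrite OmegaN_exp.
    eapply Ole_trans; [apply expO_mono; exact H|]. apply Hxie. }
  destruct (IHk a Hak th) as [a' Ha'].
  exists (exp Omega a'). eapply FSO_explim; eauto. split; auto.
Qed.

Lemma FSO_exists_k k : forall xi, Olt xi (OmegaN k) -> forall th, exists r, FSO xi th r.
Proof.
  induction k.
  - apply FSO_step. intros xi H. exfalso. apply (OS_not_le_OZ xi H).
  - apply FSO_step. exact IHk.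
Qed.

Lemma FSO_exists xi th : Olt xi eps -> exists r, FSO xi th r.
Proof. intro H. apply lt_eps_iff in H as [k Hk]. eapply FSO_exists_k; eauto. Qed.

Lemma FSO_bound xi th r : FSO xi th r -> Olt xi eps -> Olt th eps -> Olt r eps.
Proof.
  induction 1; intros Hxi Hth.
  - apply le_eps with xi; auto. constructor.
  - apply le_eps with xi; auto. constructor.
  - apply eps_add.
    + eapply le_eps; [eapply NF_m_le; eauto|auto].
    + apply IHFSO; auto. apply le_eps with xi; auto. apply Olt_le. eapply NF_g_lt; eauto.
  - apply eps_mul; auto. eapply le_eps; [eapply NF_e_le; eauto|auto].
  - apply eps_add.
    + eapply le_eps; [|eapply le_eps; [eapply NF_m_le; eauto|auto]].
      apply mul_mono_r. eapply Ole_trans; [apply le_succ|apply H1].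
    + apply IHFSO; auto. eapply le_eps; [eapply NF_e_le; eauto|auto].
  - apply eps_mul; auto. eapply le_eps; [|eapply le_eps; [apply H|auto]].
    apply Olt_le, expO_lt_S.
  - apply eps_expO. apply IHFSO; auto.
    eapply le_eps; [apply le_expO|]. eapply le_eps; [apply H|auto].
Qed.

Lemma fso_lt_eps xi th : Olt xi eps -> Olt th eps -> Olt (fso xi th) eps.
Proof.
  intros H1 H2. unfold fso. apply (FSO_bound xi th); auto. apply the_spec. apply FSO_exists; auto.
Qed.

Lemma one_le_omega : Ole one omega.
Proof. unfold omega. apply Ole_Lr with (k := 1). apply Ole_refl. Qed.

Lemma omega_le_expw1 : Ole omega (exp omega one).
Proof. change (exp omega one) with (mul one omega). apply mul_1_l_ge. Qed.
Lemma expw1_le_omega : Ole (exp omega one) omega.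
Proof. change (exp omega one) with (mul one omega). apply mul_1_l_le. Qed.

Lemma two_not_le_one : ~ Ole two one.
Proof. intro H. apply (lt_irrefl one). exact H. Qed.

Lemma expO1_ge_two : Ole two (exp Omega one).
Proof. eapply Ole_trans; [apply two_le_Omega|]. simpl. apply mul_1_l_ge. Qed.

Lemma NF_small xi a b g : NF xi a b g -> Ole xi one -> Ole a OZ /\ Ole g OZ /\ Ole b one.
Proof.
  intros HN Hx.
  assert (Ha : Ole a OZ).
  { destruct (total a OZ) as [H|H]; auto. exfalso. apply two_not_le_one.
    eapply Ole_trans; [apply expO1_ge_two|]. eapply Ole_trans; [apply expO_mono; exact H|].
    eapply Ole_trans; [eapply NF_e_le; eauto|exact Hx]. }
  split; auto. split.
  - destruct HN as (_ & _ & _ & Hg). apply Ole_S_inv. eapply Ole_trans; [exact Hg|].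
    apply (expO_mono _ _ Ha).
  - eapply Ole_trans; [eapply NF_b_le; eauto|exact Hx].
Qed.

Lemma NF_ge1 xi a b g : NF xi a b g -> Ole one xi.
Proof. intro HN. eapply Ole_trans; [|eapply NF_b_le; eauto]. apply HN. Qed.

Lemma InC_small xi y : InC xi y -> (Ole xi OZ -> Ole y OZ) /\ (Ole xi one -> Ole y one).
Proof.
  induction 1.
  - split; intros; auto. eapply Ole_trans; eauto. constructor.
  - split; intro Hx.
    + exfalso. apply (OS_not_le_OZ OZ). eapply Ole_trans; [eapply NF_ge1; eauto|exact Hx].
    + destruct (NF_small _ _ _ _ H Hx) as (Ha & _ & _).
      eapply Ole_trans; [apply (proj1 IHInC); auto|constructor].
  - split; intro Hx.
    + exfalso. apply (OS_not_le_OZ OZ). eapply Ole_trans; [eapply NF_ge1; eauto|exact Hx].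
    + destruct (NF_small _ _ _ _ H Hx) as (_ & Hg & _).
      eapply Ole_trans; [apply (proj1 IHInC); auto|constructor].
  - split; intro Hx.
    + exfalso. apply (OS_not_le_OZ OZ). eapply Ole_trans; [eapply NF_ge1; eauto|exact Hx].
    + destruct (NF_small _ _ _ _ H Hx) as (_ & _ & Hb).
      eapply Ole_trans; [apply H0|exact Hb].
Qed.

Lemma star_le0 xi : Ole xi OZ -> Ole (star xi) OZ.
Proof.
  intro H. unfold star.
  assert (Hs := the_spec (fun s => InC xi s /\ forall y, InC xi y -> Ole y s)).
  destruct Hs as [Hs _].
  - exists OZ. split. apply InC_zero; auto; constructor.
    intros y Hy. apply (InC_small _ _ Hy); auto.
  - apply (InC_small _ _ Hs); auto.
Qed.

Lemma NF_one xi : Oeq xi one -> NF xi OZ one OZ.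
Proof.
  intro H. unfold NF. simpl. split; [exact H|]. split; [apply Ole_refl|].
  split; [apply two_le_Omega|apply Ole_refl].
Qed.

Lemma star_le1 xi : Oeq xi one -> Ole (star xi) one.
Proof.
  intro H. unfold star.
  assert (Hs := the_spec (fun s => InC xi s /\ forall y, InC xi y -> Ole y s)).
  destruct Hs as [Hs _].
  - exists one. split. eapply InC_b; [apply NF_one; auto|split; apply Ole_refl].
    intros y Hy. apply (InC_small _ _ Hy); apply H.
  - apply (InC_small _ _ Hs); apply H.
Qed.

Lemma th_P th (Hth : is_theta th) z : Olt z eps -> InP (th z).
Proof. intro H. apply (Hth z H). Qed.

Lemma InP_ge1 p : InP p -> Ole one p.
Proof. intros [_ [x Hx]]. eapply Ole_trans; [|apply Hx]. apply exp_ge1, one_le_omega. Qed.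

Lemma InP_cnt p : InP p -> Olt p Omega.
Proof. intros [H _]; exact H. Qed.

Lemma th_cnt th (Hth : is_theta th) z : Olt z eps -> Olt (th z) eps.
Proof. intro H. apply cnt_eps, InP_cnt, th_P; auto. Qed.

Lemma gap p : InP p -> Ole p one \/ Ole omega p.
Proof.
  intros [_ [x Hx]]. destruct (total x OZ) as [H|H].
  - left. eapply Ole_trans; [apply Hx|]. apply (exp_mono_r _ _ _ one_le_omega H).
  - right. eapply Ole_trans; [apply omega_le_expw1|]. eapply Ole_trans; [|apply Hx].
    apply exp_mono_r; [apply one_le_omega|exact H].
Qed.

Lemma P_excl p q : InP p -> Oeq q p -> Olt (natO 1) q -> Olt q omega -> False.
Proof.
  intros HP Hq H1 H2. destruct (gap p HP) as [H|H].
  - apply two_not_le_one. eapply Ole_trans; [exact H1|]. eapply Ole_trans; [apply Hq|exact H].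
  - eapply le_lt_false; [|exact H2]. eapply Ole_trans; [exact H|apply Hq].
Qed.

Lemma OZ_lt_eps : Olt OZ eps.
Proof. eapply le_lt_trans; [constructor|apply Omega_lt_eps]. Qed.

Lemma th_gt1 th (Hth : is_theta th) w : Olt w eps -> Olt OZ w -> Ole two (th w).
Proof.
  intros Hw H0. destruct (Hth w Hw) as [[HP [_ Hc]] _].
  assert (Hlt : Olt (th OZ) (th w)).
  { apply Hc; auto. eapply le_lt_trans; [apply star_le0, Ole_refl|]. apply InP_ge1; auto. }
  eapply Ole_trans; [|exact Hlt]. constructor. apply InP_ge1, th_P; auto. apply OZ_lt_eps.
Qed.

Lemma th_le_one th (Hth : is_theta th) z : Ole z OZ -> Olt z eps -> Ole (th z) one.
Proof.
  intros H0 Hz. apply (Hth z Hz). split; [|split].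
  - split; [exact two_le_Omega|]. exists OZ. split; apply Ole_refl.
  - unfold Olt. constructor. apply star_le0; auto.
  - intros y Hy. exfalso. apply (OS_not_le_OZ y). eapply Ole_trans; eauto.
Qed.

Lemma thstar_spec th xi :
  let v := thstar th xi in
    (exists z, Oeq xi (OS z) /\ Oeq v (th z)) \/
    (~ succO xi /\ FIX th xi /\ Oeq v (tau xi)) \/
    (~ succO xi /\ ~ FIX th xi /\ Oeq v OZ).
Proof.
  unfold thstar. apply the_spec.
  destruct (classic (succO xi)) as [[z Hz]|Hs].
  - exists (th z). left. exists z. split; auto. split; apply Ole_refl.
  - destruct (classic (FIX th xi)) as [Hf|Hf].
    + exists (tau xi). right; left. split; auto. split; auto. split; apply Ole_refl.
    + exists OZ. right; right. split; auto. split; auto. split; apply Ole_refl.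
Qed.

Lemma thstar_cases th xi : Olt xi eps ->
  Ole (thstar th xi) OZ \/
  (exists z, Oeq xi (OS z) /\ Olt z eps /\ Oeq (thstar th xi) (th z)) \/
  (exists g, Olt xi g /\ Olt g eps /\ Oeq (thstar th xi) (th g)).
Proof.
  intro Hx. destruct (thstar_spec th xi) as [[z [Hz Hv]]|[[_ [Hf Hv]]|[_ [_ Hv]]]].
  - right; left. exists z. split; auto. split; auto.
    eapply le_lt_trans; [|exact Hx]. apply Olt_le. unfold Olt. apply Hz.
  - right; right. destruct Hf as [_ [_ [g [H1 [H2 H3]]]]]. exists g. split; auto. split; auto.
    split; eapply Ole_trans; [apply Hv|apply H3|apply H3|apply Hv].
  - left. apply Hv.
Qed.

Lemma thstar_lt_eps th (Hth : is_theta th) xi : Olt xi eps -> Olt (thstar th xi) eps.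
Proof.
  intro Hx. destruct (thstar_cases th xi Hx) as [H|[[z [_ [Hz H]]]|[g [_ [Hg H]]]]].
  - eapply le_lt_trans; [exact H|apply OZ_lt_eps].
  - eapply le_lt_trans; [apply H|]. apply th_cnt; auto.
  - eapply le_lt_trans; [apply H|]. apply th_cnt; auto.
Qed.

Lemma check_le th z : Ole (check th z) z.
Proof.
  unfold check.
  assert (Hs := the_spec (fun c =>
    (Olt OZ (thstar th z) /\
       exists d r, Oeq c (mul Omega d) /\ Olt r Omega /\ Oeq z (add c r)) \/
    (Ole (thstar th z) OZ /\ Oeq c z))).
  destruct Hs as [[_ [d [r [_ [_ H]]]]]|[_ H]].
  - destruct (total (thstar th z) OZ) as [H|H].
    + exists z. right. split; auto. split; apply Ole_refl.
    + destruct (division Omega z one_le_Omega) as [d [r [H1 H2]]].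
      exists (mul Omega d). left. split; auto. exists d, r. split; [split; apply Ole_refl|].
      split; auto.
  - eapply Ole_trans; [apply add_ge_l|apply H].
  - apply H.
Qed.

Lemma thit_lt_eps th (Hth : is_theta th) z : Olt z eps -> forall i, Olt (thit th z i) eps.
Proof.
  intros Hz i. destruct i as [|i].
  - simpl. apply thstar_lt_eps; auto.
  - simpl. apply th_cnt; auto. apply fso_lt_eps.
    + eapply le_lt_trans; [apply check_le|exact Hz].
    + induction i.
      * simpl. apply thstar_lt_eps; auto.
      * simpl. apply th_cnt; auto. apply fso_lt_eps; auto.
        eapply le_lt_trans; [apply check_le|exact Hz].
Qed.

Lemma cnf_app_ge l s : Ole (cnf_sum l) (cnf_sum (l ++ s)).
Proof. induction l; simpl. constructor. apply add_mono_r; auto. Qed.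

Lemma FSn_bound th (Hth : is_theta th) xi n t : FSn th xi n t -> Olt t eps.
Proof.
  induction 1.
  - apply OZ_lt_eps.
  - apply fso_lt_eps; auto. apply H0.
  - apply th_cnt; auto. apply eps_add; auto. apply thstar_lt_eps; auto. apply H1.
  - apply thit_lt_eps; auto. apply H1.
  - apply eps_add; auto. apply cnt_eps. eapply le_lt_trans; [|exact H].
    eapply Ole_trans; [apply cnf_app_ge|apply H2].
  - apply eps_mul; [|apply natO_lt_eps]. apply thstar_lt_eps; auto. apply cnt_eps; auto.
Qed.

Lemma decr_all x s : decr (x :: s) -> Ole x OZ -> forall y, In y (x :: s) -> Ole y OZ.
Proof.
  revert x. induction s as [|z s IH]; intros x Hd Hx y Hy.
  - destruct Hy as [<-|[]]; auto.
  - destruct Hd as [Hzx Hd]. destruct Hy as [<-|Hy]; auto.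
    apply (IH z Hd); auto. eapply Ole_trans; eauto.
Qed.

Lemma add_one_natO n : add one (natO n) = natO (S n).
Proof. induction n; simpl; auto. simpl in IHn. rewrite IHn. reflexivity. Qed.

Lemma cnf_small s : (forall y, In y s -> Ole y OZ) -> Ole (cnf_sum s) (natO (length s)).
Proof.
  induction s as [|b s IH]; intro H; simpl.
  - constructor.
  - change (OS (natO (length s))) with (natO (S (length s))). rewrite <- add_one_natO.
    eapply Ole_trans; [apply add_mono_l|apply add_mono_r, IH; intros; apply H; simpl; auto].
    apply (exp_mono_r _ _ _ one_le_omega (H b (or_introl eq_refl))).
Qed.

Lemma BH_cnt th (Hth : is_theta th) a : Olt a (BH th) -> Olt a Omega.
Proof.
  intro H. apply Olt_L_inv in H as [k Hk]. eapply lt_trans; [exact Hk|].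
  apply InP_cnt, th_P; auto. unfold Olt, eps. apply Ole_Lr with (k := S k). apply OmegaN_strict.
Qed.

Theorem lemma6p8 (th : O -> O) (Hth : is_theta th) (alpha : O) (m : nat) (eta : O) :
  Ole omega alpha -> Olt alpha (BH th) ->
  FSn th alpha m eta -> Olt (natO 1) eta -> Olt eta omega ->
  Oeq alpha omega.
Proof.
  intros Hom Hlt Hfs H1 H2.
  assert (HaO : Olt alpha Omega) by (eapply BH_cnt; eauto).
  assert (Hteps := FSn_bound th Hth _ _ _ Hfs).
  assert (Htwo : Ole two eta) by exact H1.
  inversion Hfs; subst.
  -
    exfalso. apply (OS_not_le_OZ OZ). eapply Ole_trans; [apply one_le_omega|].
    eapply Ole_trans; eauto.
  -
    exfalso. eapply le_lt_false; [exact H|exact HaO].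
  -
    exfalso. eapply P_excl; [|split; apply Ole_refl|exact H1|exact H2].
    apply th_P; auto. apply eps_add.
    + eapply FSn_bound; eauto.
    + apply thstar_lt_eps; auto. apply H3.
  -
    exfalso. destruct m as [|i].
    + simpl in H1, H2. assert (Hz : Olt z eps) by apply H3.
      destruct (thstar_cases th z Hz) as [Hv|[[w [_ [Hw Hv]]]|[w [_ [Hw Hv]]]]].
      * apply two_not_le_one. eapply Ole_trans; [exact H1|]. eapply Ole_trans; [exact Hv|constructor].
      * eapply P_excl; [apply (th_P th Hth w Hw)|exact Hv|exact H1|exact H2].
      * eapply P_excl; [apply (th_P th Hth w Hw)|exact Hv|exact H1|exact H2].
    + simpl in H1, H2. eapply P_excl; [|split; apply Ole_refl|exact H1|exact H2].
      apply th_P; auto. apply fso_lt_eps.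
      * eapply le_lt_trans; [apply check_le|apply H3].
      * apply thit_lt_eps; auto. apply H3.
  -
    exfalso. destruct l as [|a1 l']; [congruence|].
    assert (Hge : Ole (exp omega a1) (add (cnf_sum (a1 :: l')) t)).
    { eapply Ole_trans; [|apply add_ge_l]. simpl. apply add_ge_l. }
    destruct (total a1 OZ) as [Ha1|Ha1].
    + assert (Hall := decr_all a1 (l' ++ [a]) H3 Ha1).
      assert (Hs := cnf_small _ Hall).
      simpl in H4. eapply le_lt_false; [|apply (natO_lt_omega (length (a1 :: l' ++ [a])))].
      eapply Ole_trans; [exact Hom|]. eapply Ole_trans; [apply H4|exact Hs].
    + eapply le_lt_false; [|exact H2]. eapply Ole_trans; [|exact Hge].
      eapply Ole_trans; [apply omega_le_expw1|]. apply exp_mono_r; [apply one_le_omega|exact Ha1].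
  -
    rename H0 into Hxb.
    assert (Hbe : Olt b eps) by (apply cnt_eps; auto).
    destruct (thstar_cases th b Hbe) as [Hv|[[w [Hbw [Hw Hv]]]|[w [Hbw [Hw Hv]]]]].
    + exfalso. apply (OS_not_le_OZ one). eapply Ole_trans; [exact H1|].
      eapply Ole_trans; [apply mul_mono_l; exact Hv|apply mul_0_l_le].
    + assert (HP := th_P th Hth w Hw).
      destruct (gap _ HP) as [Hp|Hp].
      * assert (Hw0 : Ole w OZ).
        { destruct (total w OZ) as [Hx|Hx]; auto. exfalso. apply two_not_le_one.
          eapply Ole_trans; [apply th_gt1; eauto|exact Hp]. }
        assert (Hb1 : Oeq b one).
        { split; eapply Ole_trans; [apply Hbw| constructor; exact Hw0 | constructor; constructor | apply Hbw]. }
        assert (Hthb : Ole (th b) omega).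
        { apply (Hth b Hbe). split; [|split].
          - split; [exact omega_lt_Omega|]. exists one. split; [apply omega_le_expw1|apply expw1_le_omega].
          - eapply le_lt_trans; [apply star_le1; exact Hb1|]. apply (natO_lt_omega 1).
          - intros y Hy _. assert (Hy0 : Ole y OZ).
            { apply Ole_S_inv. eapply Ole_trans; [exact Hy|apply Hb1]. }
            eapply le_lt_trans; [apply th_le_one; auto|apply (natO_lt_omega 1)].
            eapply lt_trans; eauto. }
        split; auto. eapply Ole_trans; [apply Hxb|exact Hthb].
      * exfalso. destruct m as [|m'].
        -- simpl in H1. exact (OS_not_le_OZ _ H1).
        -- eapply le_lt_false; [|exact H2]. eapply Ole_trans; [exact Hp|].
           eapply Ole_trans; [apply Hv|]. simpl. apply add_ge_r.
    + assert (HP := th_P th Hth w Hw).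
      destruct (gap _ HP) as [Hp|Hp]; exfalso.
      * assert (Hw0 : Olt OZ w) by (eapply le_lt_trans; [constructor|exact Hbw]).
        apply two_not_le_one. eapply Ole_trans; [apply th_gt1; eauto|exact Hp].
      * destruct m as [|m'].
        -- simpl in H1. exact (OS_not_le_OZ _ H1).
        -- eapply le_lt_false; [|exact H2]. eapply Ole_trans; [exact Hp|].
           eapply Ole_trans; [apply Hv|]. simpl. apply add_ge_r.
Qed.
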